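(* Let $w$ be an infinite word on $\mathcal{A}$ with infinitely many palindromic prefixes; let $(n_i)_{i\ge1}$ be the increasing sequence of their lengths ($n_1=0$) and $\pi_i$ the palindromic prefix of $w$ of length $n_i$. Let $i_0$ be an integer. The following are equivalent: (i) $n_{i+1}\le 2n_i+1$ for all $i\ge i_0$; (ii) there exists a reduced function $\psi$ such that for every $i\ge i_0$, either $\psi(i)\in\mathcal{A}$ and $\pi_{i+1}=\pi_i\,\psi(i)\,\pi_i$, or $\psi(i)\in\mathbb{N}^*$ and $\pi_{i+1}=\pi_i b$, where $b$ is the word with $\pi_i=\pi_{\psi(i)}b$ (i.e. $\pi_{i+1}=\pi_i\pi_{\psi(i)}^{-1}\pi_i$).
   Context: $\mathcal{A}$ is an alphabet (finite or infinite) disjoint from $\mathbb{N}^*=\{1,2,\dots\}$; the empty word is a palindrome. A function here is a map $\psi:\mathbb{N}^*\to\mathbb{N}^*\sqcup\mathcal{A}$ such that for every $n\ge1$ either $\psi(n)\in\mathcal{A}$ or $1\le\psi(n)\le n-1$. Let $(t_k)_{k\ge0}$ be the (finite or infinite) family, in increasing order, of all $n\ge1$ with $\psi(n)\in\mathcal{A}$ or $1\le\psi(n)\le n-2$. $\psi$ is reduced if for every $k\ge1$ such that $t_k$ exists: $\psi(t_k)\ne\psi(t_{k-1})$, and either $\psi(t_k)\in\mathcal{A}$ or $\psi(t_k)<t_{k-1}$. *)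

(* Defs.v *)
From mathcomp Require Import all_boot.
Set Implicit Arguments. Unset Strict Implicit. Unset Printing Implicit Defensive.

Definition palindrome {A : Type} (s : seq A) : Prop := rev s = s.

Definition prefix {A : Type} (w : nat -> A) (k : nat) : seq A := mkseq w k.

Definition inf_pal_prefixes {A : Type} (w : nat -> A) : Prop :=
  forall m, exists k, m <= k /\ palindrome (prefix w k).

(* (n_i)_{i>=1} is the increasing enumeration of the lengths of the palindromic
   prefixes of w (the value n 0 is irrelevant). *)
Definition pal_lengths_enum {A : Type} (w : nat -> A) (n : nat -> nat) : Prop :=
  (forall i, 1 <= i -> n i < n i.+1) /\
  (forall k, palindrome (prefix w k) <-> exists2 i, 1 <= i & n i = k).

Definition pal_prefix {A : Type} (w : nat -> A) (n : nat -> nat) (i : nat) : seq A :=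
  prefix w (n i).

(* A "function" psi : N* -> N* ⊔ A, encoded as nat -> nat + A (value at 0
   irrelevant; inl m with m >= 1 is an element of N*, inr a an element of A):
   for every n >= 1, psi n ∈ A or 1 <= psi n <= n-1. *)
Definition is_function {A : Type} (psi : nat -> nat + A) : Prop :=
  forall m, 1 <= m ->
    match psi m with inl p => 1 <= p <= m.-1 | inr _ => true end.

(* membership in the family (t_k): m >= 1 and psi m ∈ A or 1 <= psi m <= m-2 *)
Definition in_t {A : Type} (psi : nat -> nat + A) (m : nat) : Prop :=
  1 <= m /\ match psi m with inl p => 1 <= p <= m.-2 | inr _ => true end.

Definition consecutive_t {A : Type} (psi : nat -> nat + A) (m m' : nat) : Prop :=
  [/\ m < m', in_t psi m, in_t psi m' & forall j, m < j < m' -> ~ in_t psi j].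

Definition reduced {A : Type} (psi : nat -> nat + A) : Prop :=
  is_function psi /\
  forall m m', consecutive_t psi m m' ->
    psi m' <> psi m /\
    match psi m' with inl p => p < m | inr _ => true end.

(* Main.v *)
Require Import Defs.
From mathcomp Require Import all_boot zify.
From Stdlib Require Import ClassicalEpsilon.
Set Warnings "-notation-overridden".

Definition Pal {A : Type} (w : nat -> A) k := palindrome (Defs.prefix w k).

Lemma pal_iff {A : Type} (w : nat -> A) k :
  Pal w k <-> forall x, x < k -> w x = w (k.-1 - x).
Proof.
rewrite /Pal /palindrome /Defs.prefix; split.
- move=> H x Hx.
  have := congr1 (fun s => nth (w 0) s x) H => /=.
  rewrite nth_rev ?size_mkseq // !nth_mkseq //; last by lia.
  by move=> <-; congr w; lia.
- move=> H; apply: (@eq_from_nth _ (w 0)); first by rewrite size_rev.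
  move=> x; rewrite size_rev size_mkseq => Hx.
  rewrite nth_rev ?size_mkseq // !nth_mkseq //; last by lia.
  by rewrite H; [congr w; lia | lia].
Qed.

Lemma prefixD {A : Type} (w : nat -> A) a b :
  Defs.prefix w (a + b) = Defs.prefix w a ++ mkseq (fun x => w (a + x)) b.
Proof.
rewrite /Defs.prefix /mkseq iotaD map_cat; congr (_ ++ _).
have -> : iota a b = map (addn a) (iota 0 b) by rewrite -iotaDl addn0.
by rewrite -map_comp.
Qed.

Lemma pal_period {A : Type} (w : nat -> A) L L' :
  Pal w L -> Pal w L' -> L' <= L ->
  forall x, x + (L - L') < L -> w (x + (L - L')) = w x.
Proof.
move=> /pal_iff HL /pal_iff HL' le x Hx.
rewrite HL // HL'; last by lia.
congr w; lia.
Qed.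

Lemma pal_shrink {A : Type} (w : nat -> A) L d :
  Pal w L -> 0 < d -> d <= L ->
  (forall x, x + d < L -> w (x + d) = w x) -> Pal w (L - d).
Proof.
move=> /pal_iff HL d0 dL Hp; apply/pal_iff => x Hx.
rewrite -Hp; last by lia.
rewrite HL; last by lia.
congr w; lia.
Qed.

Lemma period_mod {A : Type} (w : nat -> A) N d :
  (forall x, x + d < N -> w (x + d) = w x) ->
  forall x, x < N -> w x = w (x %% d).
Proof.
move=> Hp; elim/ltn_ind => x IH HN.
case: (posnP d) => [->|d0]; first by rewrite modn0.
case: (ltnP x d) => Hxd; first by rewrite modn_small.
have -> : x = (x - d) + d by lia.
rewrite Hp; last by lia.
rewrite modnDr IH //; lia.
Qed.

Lemma mod_period {A : Type} (w : nat -> A) L d :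
  (forall x, x < L -> w x = w (x %% d)) ->
  forall x, x + d < L -> w (x + d) = w x.
Proof.
move=> H x Hx; rewrite H // modnDr -H //; lia.
Qed.

Lemma gap {A : Type} (w : nat -> A) N L d q :
  Pal w N -> Pal w L -> L = N + q * d -> 2 <= q -> 0 < d -> d <= N -> q * d <= N.+1 ->
  (forall x, x + d < N -> w (x + d) = w x) -> w N = w (N %% d) ->
  Pal w (L - d).
Proof.
move=> PN PL EL q2 d0 dN qdN Hp HN.
have Pe : forall x, x + q * d < L -> w (x + q * d) = w x.
  move=> x Hx; have := pal_period _ _ _ PL PN.
  have -> : L - N = q * d by lia.
  by apply; lia.
have qd0 : 0 < q * d by rewrite muln_gt0; apply/andP; split => //; lia.
have Hm : forall x, x < L -> w x = w (x %% d).
  elim/ltn_ind => x IH HxL.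
  case: (ltngtP x N) => HxN.
  - exact: period_mod _ _ _ Hp x HxN.
  - have Hm : x %% d = (x - q * d) %% d.
      by rewrite {1}(_ : x = q * d + (x - q * d)) ?modnMDl //; lia.
    rewrite Hm -IH; try lia.
    have -> : x = (x - q * d) + q * d by lia.
    rewrite Pe; last by lia.
    by congr w; lia.
  - by rewrite HxN.
apply: pal_shrink => //; first by lia.
exact: mod_period _ _ _ Hm.
Qed.
Lemma n_lt {A : Type} {w : nat -> A} {n : nat -> nat} : pal_lengths_enum w n ->
  forall i j, 1 <= i -> i < j -> n i < n j.
Proof.
move=> [Hm _] i j Hi; elim: j => [|j IH] //.
rewrite ltnS leq_eqVlt => /orP [/eqP E|Hij]; first by rewrite -E; exact: Hm.
apply: ltn_trans (IH Hij) (Hm _ _); lia.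
Qed.

Lemma n_lt_inv {A : Type} {w : nat -> A} {n : nat -> nat} : pal_lengths_enum w n ->
  forall i j, 1 <= i -> 1 <= j -> n i < n j -> i < j.
Proof.
move=> Hn i j Hi Hj H; case: (ltnP i j) => // Hji.
move: Hji; rewrite leq_eqVlt => /orP [/eqP E|Hji]; first by rewrite E ltnn in H.
have := n_lt Hn _ _ Hj Hji; lia.
Qed.

Lemma pal_n {A : Type} {w : nat -> A} {n : nat -> nat} : pal_lengths_enum w n ->
  forall i, 1 <= i -> Pal w (n i).
Proof. by move=> [_ H] i Hi; apply/H; exists i. Qed.

Lemma pal_idx {A : Type} {w : nat -> A} {n : nat -> nat} : pal_lengths_enum w n ->
  forall k, Pal w k -> exists2 i, 1 <= i & n i = k.
Proof. by move=> [_ H] k /H. Qed.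

Lemma no_between {A : Type} {w : nat -> A} {n : nat -> nat} : pal_lengths_enum w n ->
  forall i k, 1 <= i -> Pal w k -> n i < k -> k < n i.+1 -> False.
Proof.
move=> Hn i k Hi Pk H1 H2.
have [j Hj E] := pal_idx Hn _ Pk; subst k.
have := n_lt_inv Hn _ _ Hi Hj H1.
have := n_lt_inv Hn _ _ Hj (isT : 0 < i.+1) H2.
lia.
Qed.

Lemma pal0 {A : Type} (w : nat -> A) : Pal w 0.
Proof. by apply/pal_iff. Qed.

Lemma n1 {A : Type} {w : nat -> A} {n : nat -> nat} : pal_lengths_enum w n -> n 1 = 0.
Proof.
move=> Hn; have [j Hj E] := pal_idx Hn _ (pal0 w).
move: Hj; rewrite leq_eqVlt => /orP [/eqP E1|Hj]; first by rewrite E1.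
have := n_lt Hn _ _ (isT : 0 < 1) Hj; lia.
Qed.
Lemma mkseqD {T : Type} (f : nat -> T) a b :
  mkseq f (a + b) = mkseq f a ++ mkseq (fun x => f (a + x)) b.
Proof.
rewrite /mkseq iotaD map_cat; congr (_ ++ _).
have -> : iota a b = map (addn a) (iota 0 b) by rewrite -iotaDl addn0.
by rewrite -map_comp.
Qed.

Lemma eq_in_mkseq' {T : Type} (f g : nat -> T) k :
  (forall x, x < k -> f x = g x) -> mkseq f k = mkseq g k.
Proof.
move=> H; apply: (@eq_from_nth _ (f 0)); first by rewrite !size_mkseq.
by move=> x; rewrite size_mkseq => Hx; rewrite !nth_mkseq // H.
Qed.

Definition idx (n : nat -> nat) k : nat :=
  epsilon (inhabits 0) (fun p => 1 <= p /\ n p = k).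

Lemma idx_spec (n : nat -> nat) k :
  (exists p, 1 <= p /\ n p = k) -> 1 <= idx n k /\ n (idx n k) = k.
Proof. exact: epsilon_spec. Qed.

Definition psiW {A : Type} (w : nat -> A) (n : nat -> nat) (i : nat) : nat + A :=
  if n i.+1 == 2 * n i + 1 then inr (w (n i)) else inl (idx n (2 * n i - n i.+1)).

Lemma border {A : Type} {w : nat -> A} {n : nat -> nat} : pal_lengths_enum w n ->
  forall i, 1 <= i -> n i.+1 <= 2 * n i -> Pal w (2 * n i - n i.+1).
Proof.
move=> Hn i Hi Hle.
have lt := n_lt Hn _ _ Hi (ltnSn i).
have -> : 2 * n i - n i.+1 = n i - (n i.+1 - n i) by lia.
apply: pal_shrink; [exact: pal_n Hn _ Hi| lia | lia |].
move=> x Hx; apply: (pal_period _ _ _ (pal_n Hn _ (ltn_trans Hi (ltnSn i))) (pal_n Hn _ Hi)); lia.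
Qed.

Lemma psiW_inl {A : Type} {w : nat -> A} {n : nat -> nat} : pal_lengths_enum w n ->
  forall i p, 1 <= i -> n i.+1 <= 2 * n i + 1 -> psiW w n i = inl p ->
  [/\ 1 <= p, n p + n i.+1 = 2 * n i & p < i].
Proof.
move=> Hn i p Hi Hle; rewrite /psiW; case: eqP => // Hne [<-].
have Hle' : n i.+1 <= 2 * n i by lia.
have [j Hj Ej] := pal_idx Hn _ (border Hn _ Hi Hle').
have [H1 H2] := idx_spec n (2 * n i - n i.+1) (ex_intro _ j (conj Hj Ej)).
have lt := n_lt Hn _ _ Hi (ltnSn i).
split => //; first by lia.
apply: n_lt_inv Hn _ _ H1 Hi _; lia.
Qed.

Lemma psiW_inr {A : Type} {w : nat -> A} {n : nat -> nat} i a :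
  psiW w n i = inr a -> n i.+1 = 2 * n i + 1 /\ a = w (n i).
Proof. by rewrite /psiW; case: eqP => // E [<-]. Qed.

Lemma psiW_spec {A : Type} {w : nat -> A} {n : nat -> nat} : pal_lengths_enum w n ->
  forall i, 1 <= i -> n i.+1 <= 2 * n i + 1 ->
       (exists a, psiW w n i = inr a /\
          pal_prefix w n i.+1 = pal_prefix w n i ++ a :: pal_prefix w n i) \/
       (exists p, psiW w n i = inl p /\
          exists b, pal_prefix w n i = pal_prefix w n p ++ b /\
                    pal_prefix w n i.+1 = pal_prefix w n i ++ b).
Proof.
move=> Hn i Hi Hle.
have lt := n_lt Hn _ _ Hi (ltnSn i).
have Pe := pal_period _ _ _ (pal_n Hn _ (ltn_trans Hi (ltnSn i))) (pal_n Hn _ Hi) (ltnW lt).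
case E: (psiW w n i) => [p|a].
- right; exists p; split => //.
  have [H1 H2 H3] := psiW_inl Hn _ _ Hi Hle E.
  exists (mkseq (fun x => w (n p + x)) (n i - n p)).
  rewrite /pal_prefix /Defs.prefix; split.
    by rewrite -mkseqD; congr mkseq; lia.
  have -> : n i.+1 = n i + (n i - n p) by lia.
  rewrite mkseqD; congr (_ ++ _); apply: eq_in_mkseq' => x Hx.
  have := Pe (n p + x); rewrite (_ : n p + x + (n i.+1 - n i) = n i + x); last by lia.
  by apply; lia.
- left; exists a; split => //.
  have [H1 H2] := psiW_inr _ _ E; subst a.
  rewrite /pal_prefix /Defs.prefix H1.
  have -> : 2 * n i + 1 = n i + (1 + n i) by lia.
  rewrite mkseqD mkseqD; congr (_ ++ _ :: _); first by rewrite addn0.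
  apply: eq_in_mkseq' => x Hx.
  have := Pe x; rewrite (_ : x + (n i.+1 - n i) = n i + (1 + x)); last by lia.
  by apply; lia.
Qed.
Definition progH (n : nat -> nat) m m' :=
  forall j, m < j < m' -> n j.+1 + n j.-1 = 2 * n j.

Lemma prog {A : Type} {w : nat -> A} {n : nat -> nat} : pal_lengths_enum w n ->
  forall m m', 1 <= m -> progH n m m' ->
  forall k, m + k <= m' -> n (m + k) = n m + k * (n m.+1 - n m).
Proof.
move=> Hn m m' Hm H.
have lt := n_lt Hn _ _ Hm (ltnSn m).
elim/ltn_ind => k IH Hk.
case: k IH Hk => [|[|k]] IH Hk; first by rewrite addn0 mul0n addn0.
  by rewrite addn1; lia.
have E1 := IH k.+1 (ltnSn _) (ltac:(lia)).
have E0 := IH k (ltac:(lia)) (ltac:(lia)).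
have Hj := H (m + k.+1); rewrite /= in Hj.
have := Hj (ltac:(apply/andP; split; lia)).
rewrite (_ : (m + k.+1).-1 = m + k); last by lia.
rewrite (_ : (m + k.+1).+1 = m + k.+2); last by lia.
rewrite E1 E0; nia.
Qed.

Lemma keyGap {A : Type} {w : nat -> A} {n : nat -> nat} : pal_lengths_enum w n ->
  forall m m' q, 1 <= m -> m < m' -> progH n m m' -> 2 <= q ->
  n m'.+1 = n m' + q * (n m.+1 - n m) -> q * (n m.+1 - n m) <= (n m').+1 ->
  q * (n m.+1 - n m) <= n m' \/ w (n m') = w (n m' %% (n m.+1 - n m)) -> False.
Proof.
move=> Hn m m' q Hm Hmm' Hp q2 EL qdN HN'.
set d := n m.+1 - n m in EL qdN HN'.
have lt := n_lt Hn _ _ Hm (ltnSn m).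
have d0 : 0 < d by rewrite /d; lia.
have Hm' : 1 <= m' by lia.
have EN := prog Hn _ _ Hm Hp (m' - m) (ltac:(lia)).
have EN1 := prog Hn _ _ Hm Hp (m' - m).-1 (ltac:(lia)).
rewrite (_ : m + (m' - m) = m') in EN; last by lia.
have dN : d <= n m' by rewrite EN /d; nia.
have Pd : forall x, x + d < n m' -> w (x + d) = w x.
  have P1 : Pal w (n (m + (m' - m).-1)) by apply: pal_n Hn _ _; lia.
  have := pal_period _ _ _ (pal_n Hn _ Hm') P1.
  have -> : n m' - n (m + (m' - m).-1) = d.
    rewrite EN EN1 /d; case: (m' - m) (ltac:(lia) : 0 < m' - m) => [|k] // _ /=; nia.
  move=> H; apply: H; apply: ltnW; apply: n_lt Hn _ _ _ _; lia.
have HN : w (n m') = w (n m' %% d).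
  case: HN' => // Hle.
  have PLe := pal_period _ _ _ (pal_n Hn m'.+1 isT) (pal_n Hn _ Hm') (ltac:(lia)) (n m' - q * d).
  rewrite (_ : n m'.+1 - n m' = q * d) in PLe; last by lia.
  rewrite (_ : n m' - q * d + q * d = n m') in PLe; last by lia.
  rewrite PLe; last by lia.
  rewrite (period_mod _ _ _ Pd); last by lia.
  congr w; rewrite {2}(_ : n m' = q * d + (n m' - q * d)); last by lia.
  by rewrite modnMDl.
have PL := gap _ _ _ _ _ (pal_n Hn _ Hm') (pal_n Hn m'.+1 isT) EL q2 d0 dN qdN Pd HN.
have qd2 : 2 * d <= q * d by rewrite leq_mul2r q2 orbT.
apply: (no_between Hn _ _ Hm' PL); lia.
Qed.

Lemma keyA {A : Type} {w : nat -> A} {n : nat -> nat} : pal_lengths_enum w n ->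
  forall m m' p, 1 <= m -> m < m' -> progH n m m' ->
  n p + n m'.+1 = 2 * n m' ->
  (m <= p /\ p + 2 <= m') \/ (n p + n m.+1 = 2 * n m) -> False.
Proof.
move=> Hn m m' p Hm Hmm' Hp Ep Hc.
have lt := n_lt Hn _ _ Hm (ltnSn m).
have EN := prog Hn _ _ Hm Hp (m' - m) (ltac:(lia)).
rewrite (_ : m + (m' - m) = m') in EN; last by lia.
case: Hc => [[H1 H2]|H].
- have EP := prog Hn _ _ Hm Hp (p - m) (ltac:(lia)).
  rewrite (_ : m + (p - m) = p) in EP; last by lia.
  apply: (keyGap Hn m m' (m' - p) Hm Hmm' Hp); first by lia.
  + rewrite EN; rewrite EN EP in Ep.
    have -> : m' - m = (p - m) + (m' - p) by lia.
    rewrite mulnDl; nia.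
  + rewrite EN; have -> : m' - m = (p - m) + (m' - p) by lia. nia.
  + left; rewrite EN; have -> : m' - m = (p - m) + (m' - p) by lia. nia.
- apply: (keyGap Hn m m' (m' - m).+1 Hm Hmm' Hp); first by lia.
  + rewrite EN; rewrite EN in Ep. rewrite mulSn. lia.
  + rewrite EN mulSn. lia.
  + left; rewrite EN mulSn. lia.
Qed.

Lemma keyB {A : Type} {w : nat -> A} {n : nat -> nat} : pal_lengths_enum w n ->
  forall m m', 1 <= m -> m < m' -> progH n m m' ->
  n m'.+1 = 2 * n m' + 1 -> n m.+1 = 2 * n m + 1 -> w (n m') = w (n m) -> False.
Proof.
move=> Hn m m' Hm Hmm' Hp E' E Ew.
have EN := prog Hn _ _ Hm Hp (m' - m) (ltac:(lia)).
rewrite (_ : m + (m' - m) = m') in EN; last by lia.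
have Ed : n m.+1 - n m = (n m).+1 by lia.
apply: (keyGap Hn m m' (m' - m).+1 Hm Hmm' Hp); first by lia.
+ rewrite E' Ed; rewrite Ed in EN; rewrite EN mulSn; lia.
+ rewrite Ed; rewrite Ed in EN; rewrite EN mulSn; lia.
+ right; rewrite Ew Ed; rewrite Ed in EN; rewrite EN.
  by rewrite addnC modnMDl modn_small.
Qed.
Definition first_t {A : Type} (psi : nat -> nat + A) J m0 :=
  [/\ J <= m0, in_t psi m0 & forall j, J <= j < m0 -> ~ in_t psi j].

Definition a0 {A : Type} (w : nat -> A) n J (c1 : A) : A :=
  epsilon (inhabits c1) (fun a => exists m0, first_t (psiW w n) J m0 /\ psiW w n m0 = inr a).

Definition other {A : Type} (c1 c2 x : A) : A :=
  if excluded_middle_informative (x = c1) then c2 else c1.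

Lemma other_ne {A : Type} (c1 c2 x : A) : c1 <> c2 -> other c1 c2 x <> x.
Proof.
rewrite /other; case: excluded_middle_informative => /= [E|E] Hc H.
- by apply: Hc; rewrite H E.
- by apply: E; rewrite H.
Qed.

Definition psiC {A : Type} (w : nat -> A) n J (c1 c2 : A) (i : nat) : nat + A :=
  let cl := other c1 c2 (a0 w n J c1) in
  if J <= i then psiW w n i
  else if i == J.-1 then inr cl
  else if i == 1 then inr (other c1 c2 cl) else inl i.-1.

Lemma in_t_ext {A : Type} (psi1 psi2 : nat -> nat + A) j :
  psi1 j = psi2 j -> in_t psi1 j <-> in_t psi2 j.
Proof. by rewrite /in_t => ->. Qed.

Lemma first_t_uniq {A : Type} (psi : nat -> nat + A) J m1 m2 :
  first_t psi J m1 -> first_t psi J m2 -> m1 = m2.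
Proof.
move=> [H1 T1 N1] [H2 T2 N2]; case: (ltngtP m1 m2) => // H.
- by case: (N2 m1); first (apply/andP; split).
- by case: (N1 m2); first (apply/andP; split).
Qed.

Lemma core {A : Type} {w : nat -> A} {n : nat -> nat} : pal_lengths_enum w n ->
  forall J c1 c2, 1 <= J -> (forall i, J <= i -> n i.+1 <= 2 * n i + 1) ->
  (2 <= J -> c1 <> c2) ->
  reduced (psiC w n J c1 c2) /\ forall i, J <= i -> psiC w n J c1 c2 i = psiW w n i.
Proof.
move=> Hn J c1 c2 J1 HJ Hc.
set psi := psiC w n J c1 c2.
have Hreg : forall i, J <= i -> psi i = psiW w n i by move=> i Hi; rewrite /psi /psiC Hi.
split => //.
have Hfun : is_function psi.
  move=> m Hm; case: (leqP J m) => HJm.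
  - rewrite Hreg //; case E: (psiW w n m) => [p|a] //.
    have [H1 _ H3] := psiW_inl Hn _ _ Hm (HJ _ HJm) E; lia.
  - rewrite /psi /psiC leqNgt HJm /=.
    case: eqP => // _; case: eqP => // H1; lia.
split => //.
set cl := other c1 c2 (a0 w n J c1).
have Ppre : forall i, i < J -> psi i =
    if i == J.-1 then inr cl else if i == 1 then inr (other c1 c2 cl) else inl i.-1.
  by move=> i Hi; rewrite /psi /psiC leqNgt Hi.
have nont : forall j, J <= j -> 1 <= j -> ~ in_t psi j -> n j.+1 + n j.-1 = 2 * n j.
  move=> j HJj Hj Nt.
  case E: (psiW w n j) => [p|a]; last first.
    by case: Nt; rewrite /in_t Hreg // E.
  have := Hfun j Hj; rewrite Hreg // E => /andP [p1 p2].
  case: (leqP p j.-2) => p3.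
    by case: Nt; rewrite /in_t Hreg // E p1 p3.
  have [_ H2 _] := psiW_inl Hn _ _ Hj (HJ _ HJj) E.
  rewrite (_ : j.-1 = p); [lia | lia].
move=> m m' [Hmm' Tm Tm' Nb].
have Hm1 : 1 <= m by case: Tm.
have progOK : J <= m.+1 -> progH n m m'.
  move=> HJm j /andP [h1 h2]; apply: nont; try lia.
  by apply: Nb; apply/andP.
case: (leqP J m') => HJm'; last first.
  have Em' : m' = J.-1.
    case: (eqVneq m' J.-1) => // Hne.
    move: Tm'; rewrite /in_t Ppre // (negbTE Hne).
    case: eqP => [?|_]; first by lia.
    case=> _ /andP [_ h]; lia.
  have Em : m = 1.
    case: (eqVneq m 1) => // Hne.
    move: Tm; rewrite /in_t Ppre; last by lia.
    rewrite (_ : (m == J.-1) = false); last by apply/eqP; lia.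
    rewrite (negbTE Hne); case=> _ /andP [_ h]; lia.
  rewrite !Ppre; try lia.
  rewrite Em' eqxx Em; case: eqP => [?|_]; first by lia.
  split => //= [[E]].
  by apply: (other_ne c1 c2 cl (Hc (ltac:(lia)))); rewrite -E.
case: (leqP J m) => HJm.
-
  rewrite !Hreg //.
  have Hp := progOK (ltac:(lia)).
  move: Tm'; rewrite /in_t Hreg //.
  case E': (psiW w n m') => [p|a] [_ Hpt].
  + have [p1 Ep _] := psiW_inl Hn m' p (ltac:(lia)) (HJ _ HJm') E'.
    split.
      move=> E; have [_ Ep2 _] := psiW_inl Hn m p Hm1 (HJ _ HJm) (esym E).
      by apply: (keyA Hn m m' p Hm1 Hmm' Hp Ep); right.
    case: (ltnP p m) => // Hpm.
    exfalso; apply: (keyA Hn m m' p Hm1 Hmm' Hp Ep); left; lia.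
  + split => // E.
    have [Em1 Em2] := psiW_inr _ _ (esym E).
    have [Em1' Em2'] := psiW_inr _ _ E'.
    apply: (keyB Hn m m' Hm1 Hmm' Hp Em1' Em1); by rewrite -Em2 -Em2'.
-
  have Em : m = J.-1.
    case: (ltnP m J.-1) => h; last by lia.
    exfalso; apply: (Nb J.-1); first by apply/andP; split; lia.
    by rewrite /in_t Ppre ?eqxx; [split => //; lia | lia].
  have Hp := progOK (ltac:(lia)).
  rewrite (Ppre m); last by lia.
  rewrite Em eqxx Hreg //.
  have Tm'W : in_t (psiW w n) m' by apply/(in_t_ext _ _ _ (Hreg _ HJm')).
  move: Tm'; rewrite /in_t Hreg //.
  case E': (psiW w n m') => [p|a] [_ Hpt].
  + split => //.
    have [p1 Ep _] := psiW_inl Hn m' p (ltac:(lia)) (HJ _ HJm') E'.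
    case: (ltnP p J.-1) => // Hpm.
    exfalso; apply: (keyA Hn m m' p Hm1 Hmm' Hp Ep); left; lia.
  + split => // -[Ea].
    have Ft : first_t (psiW w n) J m'.
      split => // j /andP [h1 h2] T; apply: (Nb j); first by apply/andP; split; lia.
      by apply/(in_t_ext _ _ _ (Hreg _ h1)).
    have [m0 [F0 E0]] : exists m0, first_t (psiW w n) J m0 /\ psiW w n m0 = inr (a0 w n J c1).
      by apply: (epsilon_spec (inhabits c1) (fun a => exists m0, first_t (psiW w n) J m0 /\ psiW w n m0 = inr a)); exists a, m'.
    have Em0 := first_t_uniq _ _ _ _ F0 Ft; subst m0.
    rewrite E' in E0; case: E0 => E0.
    apply: (other_ne c1 c2 (a0 w n J c1) (Hc (ltac:(lia)))).
    by rewrite -/cl -Ea E0.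
Qed.
Theorem proposition6p1 (A : Type) (w : nat -> A) (n : nat -> nat)
    (Hinf : inf_pal_prefixes w) (Hn : pal_lengths_enum w n) (i0 : nat) :
  (forall i, 1 <= i -> i0 <= i -> n i.+1 <= 2 * n i + 1) <->
  (exists psi : nat -> nat + A, reduced psi /\
     forall i, 1 <= i -> i0 <= i ->
       (exists a, psi i = inr a /\
          pal_prefix w n i.+1 = pal_prefix w n i ++ a :: pal_prefix w n i) \/
       (exists p, psi i = inl p /\
          exists b, pal_prefix w n i = pal_prefix w n p ++ b /\
                    pal_prefix w n i.+1 = pal_prefix w n i ++ b)).
Proof.
split.
- move=> H.
  case: (classic (exists x, w x <> w 0)) => [[x Hx]|Hc].
  + have [Hr Hreg] := core Hn (maxn i0 1) (w 0) (w x) (ltac:(lia))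
      (fun i Hi => H i (ltac:(lia)) (ltac:(lia))) (fun _ E => Hx (esym E)).
    exists (psiC w n (maxn i0 1) (w 0) (w x)); split => // i Hi Hi0.
    rewrite Hreg; last by lia.
    exact: psiW_spec Hn i Hi (H i Hi Hi0).
  + have Hw : forall x, w x = w 0.
      by move=> x; apply: NNPP => Hne; apply: Hc; exists x.
    have H1 : forall i, 1 <= i -> n i.+1 <= 2 * n i + 1.
      move=> i Hi.
      have P : Pal w (n i + 1) by apply/pal_iff => y _; rewrite !Hw.
      have [j Hj Ej] := pal_idx Hn _ P.
      have := n_lt_inv Hn _ _ Hi Hj (ltac:(lia)).
      rewrite leq_eqVlt => /orP [/eqP E|Hij]; first by rewrite E Ej; lia.
      have := n_lt Hn _ _ (ltac:(lia) : 1 <= i.+1) Hij; lia.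
    have [Hr Hreg] := core Hn 1 (w 0) (w 0) (isT : 0 < 1)
      (fun i Hi => H1 i Hi) (fun H => ltac:(lia)).
    exists (psiC w n 1 (w 0) (w 0)); split => // i Hi Hi0.
    rewrite Hreg //.
    exact: psiW_spec Hn i Hi (H i Hi Hi0).
- move=> [psi [_ Hs]] i Hi Hi0.
  case: (Hs i Hi Hi0) => [[a [_ E]]|[p [_ [b [E1 E2]]]]].
  + have := congr1 size E; rewrite /pal_prefix /Defs.prefix size_cat /= !size_mkseq; lia.
  + have := congr1 size E1; have := congr1 size E2.
    rewrite /pal_prefix /Defs.prefix !size_cat !size_mkseq; lia.
Qed.
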